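(* Let $n\geqslant 2$ and fix a caterpillar species tree $S$ with $n$ leaves labeled by a set $X$. As $G$ ranges over all $n!/2$ caterpillar gene trees with leaves bijectively labeled by $X$, the distinct roadblock sets $B_{G,S}$ are in bijection with the monotonic lattice paths from $(0,0)$ to $(n-1,n-1)$ on the $(n-1)\times(n-1)$ lattice that do not cross above the diagonal $y=x$; in particular there are $C_{n-1}=\frac{1}{n}\binom{2n-2}{n-1}$ distinct roadblock sets.
   Context: All trees are binary, rooted, leaf-labeled. A caterpillar tree with $n$ leaves is a tree in which some internal node is descended from all other internal nodes. Its canonical label vector $(x_1,\dots,x_n)$ has $x_1,x_2$ the labels of the two leaves of the cherry (the unique internal node with exactly two descendant leaves) and, for $3\leqslant i\leqslant n$, $x_i$ the label of the leaf separated from the root by $n-i+1$ edges; vectors differing only by swapping $x_1,x_2$ describe the same tree. For caterpillars $G,S$ on the same label set with canonical vectors $\mathbf g,\mathbf s$, let $\sigma(x)$ be the index of label $x$ in $\mathbf s$, let $F(j)=\max\{\sigma(g_1),\dots,\sigma(g_{j+1})\}-1$ for $1\leqslant j\leqslant n-1$, and define the roadblock set $B_{G,S}=\{(i,j)\in\mathbb Z^2: 1\leqslant j\leqslant i\leqslant n-1,\ i<F(j)\}$. A monotonic path is a sequence of lattice points with steps $(1,0)$ or $(0,1)$; it does not cross above $y=x$ if all its points $(x,y)$ satisfy $y\leqslant x$. *)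

(* Defs.v *)
From mathcomp Require Import all_boot.
Set Implicit Arguments. Unset Strict Implicit. Unset Printing Implicit Defensive.

(* A caterpillar tree on the finite label set X (n = #|X| leaves) is given by a
   canonical label vector (x_1,...,x_n): an n-tuple of distinct labels
   (x_i is stored at 0-based position i-1).  Vectors differing by swapping
   x_1,x_2 describe the same tree. *)
Definition canon_vec (X : finType) (v : #|X|.-tuple X) : bool := uniq v.

Definition sigma (X : finType) (s : #|X|.-tuple X) (x : X) : nat :=
  (index x s).+1.

Definition Fmax (X : finType) (s g : #|X|.-tuple X) (j : nat) : nat :=
  (\max_(x <- take j.+1 g) sigma s x) - 1.

Definition roadblock (X : finType) (g s : #|X|.-tuple X)
  : {set 'I_#|X| * 'I_#|X|} :=
  [set p : 'I_#|X| * 'I_#|X| |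
     [&& 1 <= nat_of_ord p.2, nat_of_ord p.2 <= nat_of_ord p.1
       & nat_of_ord p.1 < Fmax s g p.2]].

Definition roadblock_sets (X : finType) (s : #|X|.-tuple X)
  : {set {set 'I_#|X| * 'I_#|X|}} :=
  [set B | [exists g : #|X|.-tuple X, canon_vec g && (B == roadblock g s)]].

Definition lattice_step (a b : nat * nat) : bool :=
  ((b.1 == a.1.+1) && (b.2 == a.2)) || ((b.1 == a.1) && (b.2 == a.2.+1)).

Definition dyck_path (m : nat) (p : seq (nat * nat)) : bool :=
  match p with
  | [::] => false
  | q :: r =>
      [&& q == (0, 0), path lattice_step q r, last q r == (m, m)
        & all (fun z : nat * nat => z.2 <= z.1) p]
  end.

(* Main.v *)
Require Import Defs.
From mathcomp Require Import all_boot zify.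
Set Implicit Arguments. Unset Strict Implicit. Unset Printing Implicit Defensive.

Definition rights (x y c : nat) : seq (nat * nat) := [seq (k, y) | k <- iota x.+1 c].

Fixpoint build (m x y : nat) (us : seq nat) : seq (nat * nat) :=
  match us with
  | [::] => rights x y (m - x)
  | u :: t => rights x y (u - x) ++ (u, y.+1) :: build m u y.+1 t
  end.

Fixpoint extr (h : nat) (r : seq (nat * nat)) : seq nat :=
  match r with
  | [::] => [::]
  | z :: r' => if z.2 == h.+1 then z.1 :: extr z.2 r' else extr z.2 r'
  end.

Fixpoint Gr (m x y : nat) (us : seq nat) : bool :=
  match us with
  | [::] => (x == m) && (y == m)
  | u :: t => [&& x <= u, y < u & Gr m u y.+1 t]
  end.

Definition pathof m us : seq (nat * nat) := (0, 0) :: build m 0 0 us.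

Definition diag (z : nat * nat) := z.2 <= z.1.

Lemma extr_rights y x c r : extr y (rights x y c ++ r) = extr y r.
Proof.
elim: c x => [|c IH] x //=.
have -> : (y == y.+1) = false by lia.
exact: IH.
Qed.

Lemma extr_build m x y us : extr y (build m x y us) = us.
Proof.
elim: us x y => [|u t IH] x y /=.
  by rewrite -[rights _ _ _]cats0 extr_rights.
by rewrite extr_rights /= eqxx IH.
Qed.

Lemma rights_S x y c : rights x y c.+1 = (x.+1, y) :: rights x.+1 y c.
Proof. by []. Qed.

Lemma rights_prop x y c : y <= x ->
  [/\ path lattice_step (x, y) (rights x y c), last (x, y) (rights x y c) = (x + c, y)
    & all diag (rights x y c)].
Proof.
elim: c x => [|c IH] x hyx /=; first by rewrite addn0.
have [h1 h2 h3] := IH x.+1 (leqW hyx).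
rewrite h1 h2 h3 /lattice_step /diag /= !eqxx /= addnS addSn; split => //; lia.
Qed.

Lemma Gr_size m x y us : Gr m x y us -> y + size us = m.
Proof.
elim: us x y => [|u t IH] x y /=; first by case/andP => _ /eqP ->; rewrite addn0.
case/and3P => _ _ /IH; rewrite addnS; lia.
Qed.

Lemma Gr_bound m x y us : Gr m x y us -> x <= m /\ all (fun z => z <= m) us.
Proof.
elim: us x y => [|u t IH] x y /=; first by case/andP => /eqP -> _.
case/and3P => hxu _ /IH [h1 h2]; rewrite h1 h2; split => //; lia.
Qed.

Lemma Gr_low m x y us : Gr m x y us -> forall i, i < size us -> y + i < nth 0 us i.
Proof.
elim: us x y => [|u t IH] x y //=.
case/and3P => _ hyu /IH h [|i] /= hi; first by rewrite addn0.
have := h i hi; lia.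
Qed.

Lemma Gr_mono m x x' y us : x <= x' -> y <= x -> Gr m x' y us -> Gr m x y us.
Proof.
case: us => [|u t] /= h1 h2.
  case/andP => /eqP h3 /eqP h4; subst; apply/andP; split => //; apply/eqP; lia.
case/and3P => h3 -> ->; rewrite andbT; lia.
Qed.

Lemma Gr_of m x y us :
  sorted leq (x :: us) -> (forall i, i < size us -> y + i < nth 0 us i) ->
  y + size us = m -> last x us = m -> Gr m x y us.
Proof.
elim: us x y => [|u t IH] x y /=.
  by move=> _ _; rewrite addn0 => -> ->; rewrite !eqxx.
case/andP => hxu hs hl hsz hlast.
rewrite hxu /=; apply/andP; split.
  by have := hl 0 isT; rewrite addn0.
apply: IH => //.
- move=> i hi; have := hl i.+1 hi; rewrite /=; lia.
- rewrite addSn; lia.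
Qed.

Lemma build_step m x y E : Gr m x.+1 y E -> build m x y E = (x.+1, y) :: build m x.+1 y E.
Proof.
case: E => [|u t] /=.
  case/andP => /eqP <- _; by rewrite subSnn subSS subnn.
case/and3P => h _ _.
have -> : u - x = (u - x.+1).+1 by lia.
by rewrite rights_S.
Qed.

Lemma build_dyck m x y us : Gr m x y us -> y <= x ->
  [&& path lattice_step (x, y) (build m x y us),
      last (x, y) (build m x y us) == (m, m) & all diag (build m x y us)].
Proof.
elim: us x y => [|u t IH] x y /=.
  case/andP => /eqP -> /eqP -> _; by rewrite subnn /= eqxx.
case/and3P => hxu hyu hG hyx.
have [r1 r2 r3] := rights_prop (u - x) hyx.
have /and3P [b1 b2 b3] := IH _ _ hG hyu.
rewrite cat_path last_cat all_cat r1 r2 r3 /=.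
have -> : x + (u - x) = u by lia.
rewrite /lattice_step /diag /= !eqxx /= b1 b2 b3 /= !andbT; lia.
Qed.

Lemma dyck_build m x y r : path lattice_step (x, y) r -> last (x, y) r = (m, m) ->
  all diag ((x, y) :: r) -> Gr m x y (extr y r) /\ build m x y (extr y r) = r.
Proof.
elim: r x y => [|[a b] r IH] x y /=.
  by move=> _ [-> ->]; rewrite !eqxx subnn.
case/andP => hst hp hl /and3P [hd0 hd1 hd].
case/orP: hst => /andP [/= /eqP ha /eqP hb]; subst a b.
- have [hG hB] := IH _ _ hp hl (introT andP (conj hd1 hd)).
  have -> : (y == y.+1) = false by lia.
  split; first exact: Gr_mono hG.
  by rewrite build_step // hB.
- have [hG hB] := IH _ _ hp hl (introT andP (conj hd1 hd)).
  rewrite eqxx /= leqnn hG hB subnn /= andbT.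
  split => //.
Qed.


Fixpoint E (m A : nat) : nat -> seq (seq nat) :=
  match A with
  | 0 => fun _ => [:: [::]]
  | A'.+1 => fix EB (B : nat) :=
      (if B <= A' then map (cons (m - B)) (E m A' B) else [::]) ++
      (if B is B'.+1 then EB B' else [::])
  end.

Lemma E_S m A B : E m A.+1 B =
  (if B <= A then map (cons (m - B)) (E m A B) else [::]) ++
  (if B is B'.+1 then E m A.+1 B' else [::]).
Proof. by case: B. Qed.

Lemma E_mem m A B us : B <= A -> A <= m -> (us \in E m A B) = Gr m (m - B) (m - A) us.
Proof.
elim: A B us => [|A IHA] B us hBA hAm.
  have -> : B = 0 by lia.
  rewrite ?subn0 /=.
  case: us => [|u t] /=; first by rewrite eqxx.
  apply/esym/negbTE; apply/negP => /and3P [_ h /Gr_bound [h1 _]]; lia.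
have e : (m - A.+1).+1 = m - A by lia.
elim: B us hBA => [|B IHB] us hBA.
  rewrite E_S mem_cat /= orbF subn0.
  apply/idP/idP.
    case/mapP => t ht ->; rewrite (IHA 0 t (leq0n _) (ltnW hAm)) ?subn0 in ht.
    rewrite /= leqnn e ht andbT; lia.
  case: us => [|u t] /=.
    case/andP => _ /eqP; lia.
  case/and3P => h1 h2 h3.
  have [hu _] := Gr_bound h3.
  have eu : u = m by lia.
  subst u.
  by apply/mapP; exists t => //; rewrite (IHA 0 t (leq0n _) (ltnW hAm)) ?subn0 -e.
rewrite E_S mem_cat IHB; last lia.
apply/idP/idP.
  case/orP.
    case: ifP => // hB /mapP [t ht ->]; rewrite IHA // in ht; last lia.
    rewrite -e in ht.
    rewrite /= leqnn ht andbT; lia.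
  apply: Gr_mono; lia.
case: us => [|u t] /=.
  case/andP => _ /eqP; lia.
case/and3P => h1 h2 h3.
have [hu _] := Gr_bound h3.
case: (ltngtP (m - B.+1) u) => hc.
- apply/orP; right; rewrite /=; apply/and3P; split => //; lia.
- lia.
- apply/orP; left; rewrite (_ : B.+1 <= A); last lia.
  apply/mapP; exists t; last by rewrite hc.
  rewrite IHA; [|lia|lia].
  by rewrite hc -e.
Qed.

Lemma E_uniq m A B : B <= A -> A <= m -> uniq (E m A B).
Proof.
elim: A B => [|A IHA] B hBA hAm //.
elim: B hBA => [|B IHB] hBA.
  rewrite E_S (leq0n A) cats0 map_inj_uniq; first by apply: IHA; lia.
  by move=> a b [].
rewrite E_S cat_uniq IHB ?andbT; last lia.
case: ifP => hB; last by rewrite /=; apply/hasPn.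
rewrite map_inj_uniq; last by move=> a b [].
rewrite IHA //; last lia.
apply/hasPn => z; rewrite E_mem; try lia.
move=> hz; apply/mapP => [[t _ ht]]; subst z.
move: hz => /= /and3P [h _ _]; lia.
Qed.

Lemma E_SS m A B : E m A.+1 B.+1 =
  (if B.+1 <= A then map (cons (m - B.+1)) (E m A B.+1) else [::]) ++ E m A.+1 B.
Proof. by []. Qed.

Lemma E_S0 m A : E m A.+1 0 = map (cons (m - 0)) (E m A 0).
Proof. by rewrite E_S leq0n cats0. Qed.

Lemma E_size m A B : B <= A -> size (E m A B) + 'C(A + B, A.+1) = 'C(A + B, B).
Proof.
elim: A B => [|A IHA] B hBA.
  have -> : B = 0 by lia.
  by [].
elim: B hBA => [|B IHB] hBA.
  rewrite E_S0 size_map.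
  have := IHA 0 isT; rewrite !addn0 bin0 bin_small // => h.
  by rewrite bin_small.
rewrite E_SS size_cat.
case: ifP => hB.
  rewrite size_map.
  have h1 := IHA B.+1 hB.
  have h2 := IHB (ltnW hBA).
  have e : A + B.+1 = A.+1 + B by lia.
  rewrite e in h1.
  rewrite addSn !binS.
  move: h1 h2; rewrite addSn addnS. lia.
have eB : B = A by lia.
subst B.
have h2 := IHB (leqnSn _).
change (size (@nil (seq nat))) with 0; rewrite add0n.
have -> : A.+1 + A.+1 = (A.+1 + A).+1 by lia.
move: h2; set K := A.+1 + A.
rewrite !binS. lia.
Qed.


Definition uw (w : seq nat) m := [seq \max_(i <- take y.+2 w) i | y <- iota 0 m].

Lemma max_shift (t : seq nat) : t != [::] -> \max_(i <- t) i.+1 = (\max_(i <- t) i).+1.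
Proof.
elim: t => [|a t IH] // _.
rewrite !big_cons.
case: t IH => [|b t] IH; first by rewrite !big_nil !maxn0.
by rewrite IH // maxnSS.
Qed.

Lemma max_ub (t : seq nat) x : x \in t -> x <= \max_(i <- t) i.
Proof. move=> h; exact: (leq_bigmax_seq (P := predT) (F := id) x h isT). Qed.

Lemma pigeon (t : seq nat) : uniq t -> size t <= (\max_(i <- t) i).+1.
Proof.
move=> ht.
have := uniq_leq_size ht (s2 := iota 0 (\max_(i <- t) i).+1).
rewrite size_iota; apply => x hx.
by rewrite mem_iota add0n ltnS max_ub.
Qed.

Lemma take_sub (w : seq nat) a b : a <= b -> {subset take a w <= take b w}.
Proof.
move=> hab x.
rewrite -(subnKC hab) takeD mem_cat => ->; by [].
Qed.

Lemma uw_Gr m w : size w = m.+1 -> uniq w -> all (fun x => x < m.+1) w -> Gr m 0 0 (uw w m).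
Proof.
move=> hs hu ha.
have hsz : size (uw w m) = m by rewrite size_map size_iota.
have hn : forall i, i < m -> nth 0 (uw w m) i = \max_(j <- take i.+2 w) j.
  by move=> i hi; rewrite (nth_map 0) ?size_iota // nth_iota.
apply: Gr_of.
- apply/(sortedP 0) => i; rewrite /= hsz => hi.
  case: i hi => [|i] hi; first by [].
  rewrite /= !hn; try lia.
  apply/bigmax_leqP_seq => x hx _.
  apply: max_ub; exact: (take_sub (leqnSn _) hx).
- move=> i; rewrite hsz => hi; rewrite hn // add0n.
  have := pigeon (take_uniq i.+2 hu).
  rewrite size_takel ?hs; [by rewrite ltnS | lia].
- by rewrite hsz.
- case: m hs hsz hn ha => [|m] hs hsz hn ha; first by case: (uw w 0) hsz.
  rewrite (last_nth 0).
  have -> : nth 0 (0 :: uw w m.+1) (size (uw w m.+1)) = nth 0 (uw w m.+1) m by rewrite hsz.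
  rewrite hn // take_oversize ?hs //.
  apply/eqP; rewrite eqn_leq; apply/andP; split.
    apply/bigmax_leqP_seq => x hx _.
    by move/allP: ha => /(_ x hx).
  by have := pigeon hu; rewrite hs ltnS.
Qed.

Lemma Gr_sorted m x y us : Gr m x y us -> sorted leq (x :: us).
Proof.
elim: us x y => [|u t IH] x y //=.
by case/and3P => -> _ /IH.
Qed.

Lemma realize m u : 0 < m -> Gr m 0 0 u ->
  exists w, [/\ size w = m.+1, uniq w, all (fun x => x < m.+1) w & uw w m = u].
Proof.
move=> hm hG.
have hsz : size u = m by have := Gr_size hG; rewrite add0n.
have [_ hb] := Gr_bound hG.
have hlow := Gr_low hG.
have hsort : forall k, k.+1 < m -> nth 0 u k <= nth 0 u k.+1.
  move=> k hk; have := Gr_sorted hG; move/(sortedP 0) => /(_ k.+1).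
  rewrite /= hsz; apply; lia.
have inv : forall k, k <= m -> exists w, [/\ size w = k.+1, uniq w,
   (forall y, y < k -> \max_(i <- take y.+2 w) i = nth 0 u y) &
   (k < m -> \max_(i <- w) i <= nth 0 u k)].
  elim => [|k IH] hk.
    exists [:: 0]; split => //.
    by rewrite big_cons big_nil.
  have [w [h1 h2 h3 h4]] := IH (ltnW hk).
  set t := nth 0 u k.
  have hMt := h4 hk.
  have hkt : k < t by have := hlow k; rewrite add0n hsz; apply.
  have [v [hv1 hv2 hv3]] : exists v, [/\ v \notin w, v <= t & maxn (\max_(i <- w) i) v = t].
    case: (ltngtP (\max_(i <- w) i) t) => hc.
    - exists t; split => //; last by apply/maxn_idPr; exact: ltnW.
      by apply/negP => /max_ub; rewrite leqNgt hc.
    - lia.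
    - case hh: (has (fun v => v \notin w) (iota 0 t.+1)).
        case/hasP: hh => v; rewrite mem_iota add0n ltnS => hv hvw.
        exists v; split => //; rewrite hc; exact/maxn_idPl.
      move/negbT/hasPn: hh => hh.
      have := uniq_leq_size (iota_uniq 0 t.+1) (s2 := w).
      rewrite size_iota h1 => H.
      have : t.+1 <= k.+1 by apply: H => x /hh; rewrite negbK.
      lia.
  have e : \max_(i <- rcons w v) i = t by rewrite -cats1 big_cat big_seq1; exact: hv3.
  exists (rcons w v); split.
  - by rewrite size_rcons h1.
  - by rewrite rcons_uniq hv1 h2.
  - move=> y hy.
    case: (ltngtP y k) => hc; [|lia|].
      by rewrite -cats1 takel_cat ?h1 // h3.
    subst y.
    by rewrite take_oversize ?size_rcons ?h1 // e.
  - move=> hk1.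
    rewrite e; exact: hsort.
have [w [h1 h2 h3 _]] := inv m (leqnn m).
exists w; split => //.
- apply/allP => x hx.
  have := max_ub hx.
  have := h3 m.-1; rewrite prednK // take_oversize ?h1 // => /(_ (leqnn _)) ->.
  move/allP: hb => /(_ (nth 0 u m.-1)).
  rewrite mem_nth ?hsz; last lia.
  move=> /(_ isT); lia.
- apply: (@eq_from_nth _ 0); first by rewrite size_map size_iota hsz.
  move=> i; rewrite size_map size_iota => hi.
  by rewrite (nth_map 0) ?size_iota // nth_iota // add0n h3.
Qed.


Lemma max_shiftF (T : Type) (l : seq T) (F : T -> nat) :
  0 < size l -> \max_(x <- l) (F x).+1 = (\max_(x <- l) F x).+1.
Proof.
elim: l => [|a t IH] // _.
rewrite !big_cons.
case: t IH => [|b t] IH; first by rewrite !big_nil !maxn0.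
by rewrite IH // maxnSS.
Qed.

Definition ug (X : finType) (s g : #|X|.-tuple X) :=
  [seq Fmax s g y.+1 | y <- iota 0 #|X|.-1].

Lemma Fmax_eq (X : finType) (s g : #|X|.-tuple X) j : 0 < #|X| ->
  Fmax s g j = \max_(i <- take j.+1 (map (index^~ s) g)) i.
Proof.
move=> hX.
rewrite /Fmax /sigma -map_take big_map max_shiftF ?subn1 //.
rewrite size_take size_tuple; case: ifP; lia.
Qed.

Lemma all_in_s (X : finType) (s : #|X|.-tuple X) : uniq s -> forall x, x \in s.
Proof.
move=> hs x; apply/negPn/negP => hx.
have : uniq (x :: s) by rewrite /= hx hs.
move/card_uniqP => h.
have := max_card (mem (x :: s)).
rewrite h /= size_tuple; lia.
Qed.

Lemma w_props (X : finType) (s g : #|X|.-tuple X) : uniq s -> uniq g ->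
  let w := map (index^~ s) g in
  [/\ size w = #|X|, uniq w & all (fun x => x < #|X|) w].
Proof.
move=> hs hg w; split.
- by rewrite size_map size_tuple.
- rewrite map_inj_in_uniq // => a b _ _ e.
  exact: (index_inj a (all_in_s hs a) (all_in_s hs b) e).
- apply/allP => z /mapP [x _ ->].
  by rewrite -{2}(size_tuple s) index_mem all_in_s.
Qed.

Lemma ug_uw (X : finType) (s g : #|X|.-tuple X) : 0 < #|X| ->
  ug s g = uw (map (index^~ s) g) #|X|.-1.
Proof. move=> hX; apply: eq_map => y; exact: Fmax_eq. Qed.

Lemma ug_Gr (X : finType) (s g : #|X|.-tuple X) : 0 < #|X| -> uniq s -> uniq g ->
  Gr #|X|.-1 0 0 (ug s g).
Proof.
move=> hX hs hg.
have [h1 h2 h3] := w_props hs hg.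
rewrite ug_uw //; apply: uw_Gr => //; rewrite prednK //.
Qed.

Definition Bset (n : nat) (u : seq nat) : {set 'I_n * 'I_n} :=
  [set p : 'I_n * 'I_n | [&& 1 <= nat_of_ord p.2, nat_of_ord p.2 <= nat_of_ord p.1
       & nat_of_ord p.1 < nth 0 u (nat_of_ord p.2).-1]].

Lemma roadblock_B (X : finType) (s g : #|X|.-tuple X) :
  roadblock g s = Bset #|X| (ug s g).
Proof.
apply/setP => [[a b]]; rewrite !inE /=.
case: (posnP b) => hb; first by rewrite hb.
have hb' : b.-1 < #|X|.-1 by have := ltn_ord b; lia.
by rewrite /ug (nth_map 0) ?size_iota // nth_iota // add0n prednK.
Qed.

Lemma Bset_le (n : nat) u v : Gr n.-1 0 0 u -> Gr n.-1 0 0 v -> Bset n u = Bset n v ->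
  forall i, i < n.-1 -> nth 0 u i <= nth 0 v i.
Proof.
move=> hu hv e i hi; rewrite leqNgt; apply/negP => hlt.
have hsz : size v = n.-1 by have := Gr_size hv; rewrite add0n.
have [_ hb] := Gr_bound hv.
have hvi : nth 0 v i < n.
  move/allP: hb => /(_ (nth 0 v i)); rewrite mem_nth ?hsz // => /(_ isT); lia.
have hi1 : i.+1 < n by lia.
have hl := Gr_low hv (i := i); rewrite hsz add0n in hl.
move/setP: e => /(_ (Ordinal hvi, Ordinal hi1)).
by rewrite !inE /= ltnn andbF hlt (hl hi).
Qed.

Lemma Bset_inj (n : nat) u v : Gr n.-1 0 0 u -> Gr n.-1 0 0 v -> Bset n u = Bset n v -> u = v.
Proof.
move=> hu hv e.
have hsu : size u = n.-1 by have := Gr_size hu; rewrite add0n.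
have hsv : size v = n.-1 by have := Gr_size hv; rewrite add0n.
apply: (@eq_from_nth _ 0); first by rewrite hsu hsv.
move=> i; rewrite hsu => hi.
apply/eqP; rewrite eqn_leq (Bset_le hu hv e hi) (Bset_le hv hu (esym e) hi).
by [].
Qed.

Lemma realize_g (X : finType) (s : #|X|.-tuple X) u : 2 <= #|X| -> uniq s ->
  Gr #|X|.-1 0 0 u -> exists2 g : #|X|.-tuple X, uniq g & ug s g = u.
Proof.
move=> hX hs hG.
have hX0 : 0 < #|X| by lia.
have [w [h1 h2 h3 h4]] := realize (m := #|X|.-1) (ltac:(lia)) hG.
rewrite prednK // in h1 h3.
pose x0 := tnth s (Ordinal hX0).
have hg : size (map (nth x0 s) w) == #|X| by rewrite size_map h1.
have hw : forall a, a \in w -> a < size s.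
  by move=> a ha; rewrite size_tuple; move/allP: h3 => /(_ a ha).
exists (Tuple hg).
  rewrite /= map_inj_in_uniq // => a b ha hb /eqP.
  by rewrite nth_uniq ?hw // => /eqP.
rewrite ug_uw //= -map_comp map_id_in ?h4 // => a ha /=.
exact: index_uniq (hw a ha) hs.
Qed.


Lemma dyck_pathof m u : Gr m 0 0 u -> dyck_path m (pathof m u).
Proof.
move=> hG; rewrite /dyck_path /pathof eqxx /=.
by case/and3P: (build_dyck hG (leqnn 0)) => -> -> ->.
Qed.

Lemma pathof_inj m : injective (pathof m).
Proof.
move=> a b e.
have := congr1 (fun p => extr 0 (behead p)) e.
by rewrite /= !extr_build.
Qed.

Lemma dyck_inv m p : dyck_path m p -> exists2 u, Gr m 0 0 u & pathof m u = p.
Proof.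
case: p => [|q r] //= /and4P [/eqP hq hp /eqP hl ha]; subst q.
have [hG hB] := dyck_build hp hl ha.
by exists (extr 0 r) => //; rewrite /pathof hB.
Qed.

Theorem proposition2 (X : finType) (s : #|X|.-tuple X) :
  2 <= #|X| -> canon_vec s ->
  (exists f : {set 'I_#|X| * 'I_#|X|} -> seq (nat * nat),
      {in roadblock_sets s &, injective f} /\
      (forall B, B \in roadblock_sets s -> dyck_path #|X|.-1 (f B)) /\
      (forall p, dyck_path #|X|.-1 p ->
         exists2 B, B \in roadblock_sets s & f B = p)) /\
  #|roadblock_sets s| = 'C((#|X|.-1).*2, #|X|.-1) %/ #|X|.
Proof.
move=> hX hs; rewrite /canon_vec in hs.
have hX0 : 0 < #|X| by lia.
set m := #|X|.-1.
pose f (B : {set 'I_#|X| * 'I_#|X|}) :=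
  if [pick g | canon_vec g && (B == roadblock g s)] is Some g then pathof m (ug s g) else [::].
have key : forall B, B \in roadblock_sets s ->
    exists g : #|X|.-tuple X, [/\ uniq g, B = roadblock g s & f B = pathof m (ug s g)].
  move=> B; rewrite /f inE => /existsP [g0 hg0].
  case: pickP => [g /andP [hg /eqP hB]|H]; first by exists g.
  by rewrite H in hg0.
have finj : {in roadblock_sets s &, injective f}.
  move=> B1 B2 /key [g1 [hg1 -> ->]] /key [g2 [hg2 -> ->]] /pathof_inj e.
  by rewrite !roadblock_B e.
have fdyck : forall B, B \in roadblock_sets s -> dyck_path m (f B).
  move=> B /key [g [hg _ ->]]; apply: dyck_pathof; exact: ug_Gr.
have fsurj : forall p, dyck_path m p -> exists2 B, B \in roadblock_sets s & f B = p.
  move=> p /dyck_inv [u hG <-].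
  have [g hg hgu] := realize_g hX hs hG.
  have hB : roadblock g s \in roadblock_sets s.
    by rewrite inE; apply/existsP; exists g; rewrite /canon_vec hg eqxx.
  exists (roadblock g s) => //.
  have [g' [hg' e ->]] := key _ hB.
  congr pathof; rewrite -hgu.
  apply: (@Bset_inj #|X|); try exact: ug_Gr.
  by rewrite -!roadblock_B.
split; first by exists f.
set L1 := map f (enum (roadblock_sets s)).
set L2 := map (pathof m) (E m m m).
have u1 : uniq L1.
  rewrite map_inj_in_uniq ?enum_uniq // => a b; rewrite !mem_enum; exact: finj.
have u2 : uniq L2 by rewrite map_inj_uniq ?E_uniq //; exact: pathof_inj.
have hmem : L1 =i L2.
  move=> p; apply/idP/idP.
    case/mapP => B; rewrite mem_enum => /fdyck hd ->.
    have [u hG <-] := dyck_inv hd.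
    by apply: map_f; rewrite E_mem // subnn.
  case/mapP => u; rewrite E_mem // subnn => /dyck_pathof hd ->.
  have [B hB <-] := fsurj _ hd.
  by apply: map_f; rewrite mem_enum.
have := perm_size (uniq_perm u1 u2 hmem).
rewrite size_map -cardE size_map => ->.
have h1 := E_size m (leqnn m).
have h2 := mul_bin_left (m + m) m.
have -> : #|X| = m.+1 by rewrite /m prednK.
rewrite -addnn.
have -> : 'C(m + m, m) = m.+1 * size (E m m m).
  move: h2; rewrite -h1 (_ : m + m - m = m); last lia.
  nia.
by rewrite mulKn.
Qed.
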